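(* Let $X$ be a nonnegative random variable and $0<\theta\le1$. Then $X\in\mathcal{L}^{1/\theta}$ if and only if $\mathbb{P}(X>x-\xi x^{1-\theta})\sim\mathbb{P}(X>x)$ as $x\to\infty$ for all $\xi\in\mathbb{R}$.
   Context: Class $\mathcal{L}$: nonnegative $Z$ with $\mathbb{P}(Z>x)>0$ for all $x\ge0$ and $\mathbb{P}(Z>x+y)/\mathbb{P}(Z>x)\to1$ for some (equivalently all) $y>0$. $X\in\mathcal{L}^p$ ($p\ge1$) means $X\ge0$ and $X^{1/p}\in\mathcal{L}$. $f\sim g$ means $f(x)/g(x)\to1$. *)

(* Defs.v *)
From HB Require Import structures.
From mathcomp Require Import all_boot all_order all_algebra.
From mathcomp Require Import all_classical all_reals all_analysis.
Set Implicit Arguments. Unset Strict Implicit. Unset Printing Implicit Defensive.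
Import Order.TTheory GRing.Theory Num.Theory.
Import numFieldNormedType.Exports.
Local Open Scope classical_set_scope.
Local Open Scope ring_scope.

Definition tailP d (T : measurableType d) (R : realType)
  (P : probability T R) (Z : T -> R) (x : R) : R :=
  fine (P [set t | x < Z t]).

Definition asymp_equiv (R : realType) (f g : R -> R) : Prop :=
  (fun x => f x / g x) @ +oo --> (1 : R).

Definition classL d (T : measurableType d) (R : realType)
  (P : probability T R) (Z : T -> R) : Prop :=
  [/\ (forall t, 0 <= Z t),
      (forall x, 0 <= x -> 0 < tailP P Z x) &
      exists2 y : R, 0 < y &
        asymp_equiv (fun x => tailP P Z (x + y)) (tailP P Z)].

Definition classLp d (T : measurableType d) (R : realType)
  (p : R) (P : probability T R) (X : T -> R) : Prop :=
  (forall t, 0 <= X t) /\ classL P (fun t => X t `^ (1 / p)).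

(* Main.v *)
Require Import Defs.
From HB Require Import structures.
From mathcomp Require Import all_boot all_order all_algebra.
From mathcomp Require Import all_classical all_reals all_analysis.
From mathcomp Require Import ring lra.
Import Order.TTheory GRing.Theory Num.Theory.
Import numFieldNormedType.Exports.
Local Open Scope classical_set_scope.
Local Open Scope ring_scope.

Section Tail.
Variables (d : measure_display) (T : measurableType d) (R : realType)
  (P : probability T R) (X : {RV P >-> R}).

Lemma mset_gt (x : R) : measurable [set t | x < X t].
Proof.
have mX : measurable_fun setT X := measurable_funP X.
have -> : [set t | x < X t] = setT `&` X @^-1` `]x, +oo[%classic.
  apply/seteqP; split => t /=.
    by rewrite in_itv /= andbT.
  by move=> [_]; rewrite /= in_itv /= andbT.
exact: (mX measurableT _ (measurable_itv _)).
Qed.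

Lemma tail_fin (x : R) : P [set t | x < X t] \is a fin_num.
Proof. exact: fin_num_measure (mset_gt x). Qed.

Lemma tail_ge0 (x : R) : 0 <= tailP P X x.
Proof. by rewrite /tailP fine_ge0. Qed.

Lemma tail_mono (a b : R) : a <= b -> tailP P X b <= tailP P X a.
Proof.
move=> ab; rewrite /tailP fine_le ?tail_fin//.
apply: le_measure; rewrite ?inE; try exact: mset_gt.
by move=> t /= bt; exact: le_lt_trans bt.
Qed.
End Tail.

Section Gen.
Variable R : realType.

Lemma comp_infty (h phi : R -> R) (l : R) : h @ +oo --> l ->
  (forall A, \forall x \near +oo, A <= phi x) -> (fun x => h (phi x)) @ +oo --> l.
Proof. by move=> hl /cvgryPge phiy; exact: (cvg_comp phi h phiy hl). Qed.

Lemma ev_eq (f g : R -> R) (l M : R) : (forall x, M <= x -> f x = g x) ->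
  f @ +oo --> l -> g @ +oo --> l.
Proof.
move=> fg fl; apply: cvg_trans fl; apply: near_eq_cvg; near=> x; apply: fg.
by near: x; apply: nbhs_pinfty_ge; rewrite num_real.
Unshelve. all: end_near. Qed.

Lemma shift_infty (c : R) A : \forall x \near +oo, A <= x + c.
Proof.
near=> x; rewrite -lerBlDr; near: x; by apply: nbhs_pinfty_ge; rewrite num_real.
Unshelve. all: end_near. Qed.

Variable G : R -> R.
Hypothesis Gpos : forall u, 0 <= u -> 0 < G u.
Hypothesis Gmono : forall a b, 0 <= a -> a <= b -> G b <= G a.

Lemma shift_nat y : 0 < y -> (fun u => G (u + y) / G u) @ +oo --> (1:R) ->
  forall n : nat, (fun u => G (u + n%:R * y) / G u) @ +oo --> (1:R).
Proof.
move=> y0 hy; elim=> [|n IH].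
  apply: (@ev_eq (fun=> 1) _ _ 0); last exact: cvg_cst.
  by move=> x x0; rewrite mul0r addr0 divff // gt_eqF // Gpos.
have h1 := @comp_infty _ _ _ hy (shift_infty (n%:R * y)).
apply: (@ev_eq (fun u => G (u + n%:R*y + y)/G(u+n%:R*y) * (G(u+n%:R*y)/G u)) _ _ 0).
  move=> x x0; rewrite mulrA divfK ?gt_eqF ?Gpos //; last first.
    by rewrite addr_ge0 // mulr_ge0 // ltW.
  by rewrite -natr1 mulrDl mul1r addrA.
have := cvgM h1 IH; rewrite mulr1; apply; exact: _.
Qed.

Lemma ratio_le1 u c : 0 <= u -> 0 <= c -> G (u + c) / G u <= 1.
Proof.
move=> u0 c0; rewrite ler_pdivrMr ?Gpos // mul1r Gmono //.
by rewrite lerDl.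
Qed.

Lemma shift_all y : 0 < y -> (fun u => G (u + y) / G u) @ +oo --> (1:R) ->
  forall c, (fun u => G (u + c) / G u) @ +oo --> (1:R).
Proof.
move=> y0 hy.
have hpos : forall c, 0 <= c -> (fun u => G (u + c) / G u) @ +oo --> (1:R).
  move=> c c0.
  have hb := archi_boundP (divr_ge0 c0 (ltW y0)).
  set n := Num.bound _ in hb.
  have cn : c <= n%:R * y by rewrite -ler_pdivrMr // ltW.
  apply: (@squeeze_cvgr _ _ _ _ (fun u => G (u + n%:R * y) / G u) (fun=> 1)); last first.
  - exact: cvg_cst.
  - exact: shift_nat.
  near=> u.
  have u0 : 0 <= u by near: u; apply: nbhs_pinfty_ge; rewrite num_real.
  rewrite ratio_le1 // andbT ler_pM2r ?invr_gt0 ?Gpos //.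
  by apply: Gmono; rewrite ?lerD2l // addr_ge0.
move=> c; have [c0|c0] := leP 0 c; first exact: hpos.
have h1 := @comp_infty _ _ _ (hpos (- c) _) (shift_infty c).
have h2 := cvgV _ (h1 _); rewrite invr1 in h2.
have c0' : 0 <= - c by rewrite oppr_ge0 ltW.
have {}h2 := h2 _ (oner_neq0 _) c0'.
apply: (@ev_eq (fun x => (G (x + c - c) / G (x + c))^-1) _ _ (- c)); last exact: h2.
by move=> x xc /=; rewrite addrK invf_div.
Unshelve. all: end_near. Qed.
End Gen.

Section Pow.
Context {R : realType} {th : R} (th0 : 0 < th) (th1 : th <= 1).
#[local] Set Default Proof Using "All".
Local Notation p := (th^-1).

Lemma p_ge1 : 1 <= p. Proof. by rewrite invf_ge1. Qed.
Lemma p_gt0 : 0 < p. Proof. by rewrite invr_gt0. Qed.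

Lemma P1 x : 0 <= x -> (x `^ th) `^ p = x.
Proof. by move=> x0; rewrite -powRrM mulfV ?gt_eqF // powRr1. Qed.

Lemma P2 u : 0 <= u -> (u `^ p) `^ th = u.
Proof. by move=> u0; rewrite -powRrM mulVf ?gt_eqF // powRr1. Qed.

Lemma P3 u : (u `^ p) `^ (1 - th) = u `^ (p - 1).
Proof. by rewrite -powRrM mulrBr mulr1 mulVf ?gt_eqF. Qed.

Lemma P4 u : 0 <= u -> u `^ p = u * u `^ (p - 1).
Proof. by move=> u0; rewrite mulr_powRB1 // p_gt0. Qed.

Lemma B1 u b : 0 < u -> 0 <= b -> u `^ p + b * u `^ (p - 1) <= (u + b) `^ p.
Proof.
move=> u0 b0.
have -> : u + b = u * (1 + b / u) by field; rewrite gt_eqF.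
rewrite (powRM _ (ltW u0)); last by rewrite addr_ge0 // divr_ge0 // ltW.
have h : 1 + b / u <= (1 + b / u) `^ p.
  by rewrite le1r_powR ?p_ge1 // lerDl divr_ge0 // ltW.
apply: le_trans (ler_wpM2l (powR_ge0 _ _) h).
rewrite (@P4 u (ltW u0)) le_eqVlt; apply/orP; left; apply/eqP.
by field; rewrite gt_eqF.
Qed.

Lemma B2 u a : 0 < u -> 0 <= a -> a <= u -> (u - a) `^ p <= u `^ p - a * u `^ (p - 1).
Proof.
move=> u0 a0 au.
have -> : u - a = u * (1 - a / u) by field; rewrite gt_eqF.
have s0 : 0 <= 1 - a / u by rewrite subr_ge0 ler_pdivrMr // mul1r.
rewrite (powRM _ (ltW u0)) //.
have h : (1 - a / u) `^ p <= 1 - a / u.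
  move: s0; rewrite le_eqVlt => /orP[/eqP <-|s0].
    by rewrite powR0 // gt_eqF // p_gt0.
  by rewrite ge1r_powR ?p_ge1 // s0 /= lerBlDr lerDl divr_ge0 // ltW.
apply: le_trans (ler_wpM2l (powR_ge0 _ _) h) _.
rewrite (@P4 u (ltW u0)) le_eqVlt; apply/orP; left; apply/eqP.
by field; rewrite gt_eqF.
Qed.

Lemma poly_bound (t : R) n : 0 <= t -> t <= 1 -> (1 + t) ^+ n <= 1 + (2 ^+ n - 1) * t.
Proof.
move=> t0 t1; elim: n => [|n IH]; first by rewrite !expr0 subrr mul0r addr0.
rewrite exprSr; apply: le_trans (ler_wpM2r (addr_ge0 ler01 t0) IH) _.
have a1 : 1 <= (2:R) ^+ n by rewrite exprn_ege1 // ler1n.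
rewrite exprS.
set a := (2:R) ^+ n in a1 *.
have e1 : 0 <= a - 1 by rewrite subr_ge0.
have e2 : 0 <= 1 - t by rewrite subr_ge0.
have := mulr_ge0 (mulr_ge0 e1 t0) e2.
nra.
Qed.

Lemma B3 : exists K : R, 0 <= K /\ forall u, 1 <= u ->
  (u + 1) `^ p <= u `^ p + K * u `^ (p - 1).
Proof.
have hb := archi_boundP (ltW p_gt0); set n := Num.bound _ in hb.
exists (2 ^+ n); split; first by rewrite exprn_ge0.
move=> u u1; have u0 : 0 < u by rewrite (lt_le_trans ltr01).
have -> : u + 1 = u * (1 + 1 / u) by field; rewrite gt_eqF.
have t0 : 0 <= 1 / u by rewrite divr_ge0 // ltW.
have t1 : 1 / u <= 1 by rewrite ler_pdivrMr // mul1r.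
rewrite (powRM _ (ltW u0)); last by rewrite addr_ge0.
have h : (1 + 1 / u) `^ p <= 1 + 2 ^+ n / u.
  have e1 : 1 <= 1 + 1 / u by rewrite lerDl.
  have := ler_powR e1 (ltW hb); move/le_trans; apply.
  rewrite powR_mulrn ?addr_ge0 //.
  apply: le_trans (@poly_bound _ n t0 t1) _.
  rewrite lerD2l mulrA mulr1 ler_wpM2r ?invr_ge0 ?ltW //.
  by rewrite gtrBl ltr01.
apply: le_trans (ler_wpM2l (powR_ge0 _ _) h) _.
rewrite (@P4 u (ltW u0)) le_eqVlt; apply/orP; left; apply/eqP.
by field; rewrite gt_eqF.
Qed.

Lemma pow_infty A : \forall x \near +oo, A <= x `^ th.
Proof.
near=> x.
have hx : (Num.max A 0) `^ p <= x.
  by near: x; apply: nbhs_pinfty_ge; rewrite num_real.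
have m0 : 0 <= Num.max A 0 by rewrite le_max lexx orbT.
have x0 : 0 <= x by apply: le_trans hx; exact: powR_ge0.
have mA : A <= Num.max A 0 by rewrite le_max lexx.
apply: (le_trans mA).
rewrite -[X in X <= _](@P2 _ m0).
by apply: ge0_ler_powR; rewrite ?nnegrE ?powR_ge0 // ltW.
Unshelve. all: end_near. Qed.

Lemma powp_infty A : \forall u \near +oo, A <= u `^ p.
Proof.
near=> u.
have hu : Num.max A 1 <= u by near: u; apply: nbhs_pinfty_ge; rewrite num_real.
have u1 : 1 <= u by apply: le_trans hu; rewrite le_max lexx orbT.
have mA : A <= Num.max A 1 by rewrite le_max lexx.
apply: (le_trans mA); apply: (le_trans hu).
by rewrite le1r_powR // p_ge1.
Unshelve. all: end_near. Qed.

End Pow.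

Section Main.
Variables (R : realType) (th : R) (F : R -> R).
Hypotheses (th0 : 0 < th) (th1 : th <= 1).
Hypothesis Fmono : forall a b, a <= b -> F b <= F a.
Hypothesis Fge0 : forall x, 0 <= F x.
Local Notation p := (th^-1).
Local Notation G := (fun u => F (u `^ p)).

Lemma Gmono a b : 0 <= a -> a <= b -> G b <= G a.
Proof.
move=> a0 ab; apply: Fmono; apply: ge0_ler_powR; rewrite ?nnegrE //.
- by rewrite ltW // invr_gt0.
- exact: le_trans ab.
Qed.

Lemma fwd y : 0 < y -> (forall u, 0 <= u -> 0 < G u) ->
  (fun u => G (u + y) / G u) @ +oo --> (1:R) ->
  forall xi, (fun x => F (x - xi * x `^ (1 - th)) / F x) @ +oo --> (1:R).
Proof.
move=> y0 Gpos hy xi.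
have hall := @shift_all _ _ Gpos Gmono y y0 hy.
have key : \forall x \near +oo, exists u, [/\ 1 <= u, `|xi| <= u & x = u `^ p].
  near=> x.
  have x0 : 0 <= x by near: x; apply: nbhs_pinfty_ge; rewrite num_real.
  exists (x `^ th); split.
  - near: x; exact: (pow_infty th0 th1 1).
  - near: x; exact: (pow_infty th0 th1 `|xi|).
  - by rewrite (P1 th0 th1).
have [xi0|xi0] := leP 0 xi.
  have h := @comp_infty _ _ (fun x => x `^ th) _ (hall (- xi)) (pow_infty th0 th1).
  apply: (@squeeze_cvgr _ _ _ _ (fun=> 1) _ _ _ _ (cvg_cst _) h).
  near=> x; have [u [u1 uxi ->]] : exists u : R, [/\ 1 <= u, `|xi| <= u & x = u `^ p] by near: x.
  have u0 : 0 < u by rewrite (lt_le_trans ltr01).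
  have Gu := Gpos _ (ltW u0).
  rewrite (P2 th0 th1 u (ltW u0)).
  rewrite ler_pdivlMr // mul1r ler_pM2r ?invr_gt0 //.
  apply/andP; split.
    by apply: Fmono; rewrite gerDl oppr_le0 mulr_ge0 // powR_ge0.
  apply: Fmono; rewrite (P3 th0 th1).
  apply: (B2 th0 th1) => //; rewrite (le_trans _ uxi) //.
  by rewrite ger0_norm.
have c0 : 0 <= - xi by rewrite oppr_ge0 ltW.
have h := @comp_infty _ _ (fun x => x `^ th) _ (hall (- xi)) (pow_infty th0 th1).
apply: (@squeeze_cvgr _ _ _ _ _ (fun=> 1) _ _ _ h (cvg_cst _)).
near=> x; have [u [u1 uxi ->]] : exists u : R, [/\ 1 <= u, `|xi| <= u & x = u `^ p] by near: x.
have u0 : 0 < u by rewrite (lt_le_trans ltr01).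
have Gu := Gpos _ (ltW u0).
rewrite (P2 th0 th1 u (ltW u0)).
apply/andP; split.
  rewrite ler_pM2r ?invr_gt0 //.
  apply: Fmono; rewrite (P3 th0 th1) -mulNr.
  exact: (B1 th0 th1).
rewrite ler_pdivrMr // mul1r.
by apply: Fmono; rewrite -mulNr lerDl mulr_ge0 // powR_ge0.
Unshelve. all: end_near. Qed.

Lemma bwd : (forall xi, (fun x => F (x - xi * x `^ (1 - th)) / F x) @ +oo --> (1:R)) ->
  (forall x, 0 < F x) /\ (fun u => G (u + 1) / G u) @ +oo --> (1:R).
Proof.
move=> H.
have Fpos : forall x, 0 < F x.
  move=> x0; rewrite lt_neqAle Fge0 andbT; apply/eqP => Fx0.
  have /cvgrPdist_lt /(_ (1/2)) hn := H 0.
  have h2 : (0:R) < 1/2 by rewrite divr_gt0.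
  have : \forall x \near +oo, x0 <= x /\ `|1 - F (x - 0 * x `^ (1 - th)) / F x| < 1/2.
    near=> x; split; last by near: x; exact: hn.
    by near: x; apply: nbhs_pinfty_ge; rewrite num_real.
  case/filter_ex => x [xx0]; rewrite mul0r subr0.
  have -> : F x = 0 by apply/le_anti; rewrite Fge0 andbT Fx0 Fmono.
  rewrite invr0 mulr0 subr0 normr1 => hx.
  lra.
split => //.
have [K [K0 hK]] := B3 th0 th1.
have h := @comp_infty _ _ (fun u => u `^ p) _ (H (- K)) (powp_infty th0 th1).
apply: (@squeeze_cvgr _ _ _ _ _ (fun=> 1) _ _ _ h (cvg_cst _)).
near=> u.
have u1 : 1 <= u by near: u; apply: nbhs_pinfty_ge; rewrite num_real.
have u0 : 0 < u by rewrite (lt_le_trans ltr01).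
have Gu := Fpos (u `^ p).
apply/andP; split.
  rewrite ler_pM2r ?invr_gt0 //.
  apply: Fmono; rewrite (P3 th0 th1) mulNr opprK.
  exact: hK.
rewrite ler_pdivrMr // mul1r.
apply: Fmono; apply: ge0_ler_powR; rewrite ?nnegrE ?ler_wpDr //.
by rewrite invr_ge0 ltW.
Unshelve. all: end_near. Qed.

End Main.

Lemma tailY d (T : measurableType d) (R : realType) (P : probability T R)
  (X : {RV P >-> R}) (theta : R) : 0 < theta -> theta <= 1 ->
  (forall t, 0 <= X t) -> forall u, 0 <= u ->
  tailP P (fun t => X t `^ theta) u = tailP P X (u `^ theta^-1).
Proof.
move=> th0 th1 X0 u u0; rewrite /tailP; congr (fine (P _)).
have p0 : 0 < theta^-1 by rewrite invr_gt0.
apply/seteqP; split => t /= h.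
- rewrite -(P1 th0 th1 _ (X0 t)).
  apply: (gt0_ltr_powR p0) => //; rewrite nnegrE ?powR_ge0 //.
- rewrite -(P2 th0 th1 u u0).
  apply: (gt0_ltr_powR th0) => //; rewrite nnegrE ?powR_ge0 //.
Qed.

Theorem lemmaA2 (d : measure_display) (T : measurableType d) (R : realType)
  (P : probability T R) (X : {RV P >-> R}) (theta : R) :
  (forall t, 0 <= X t) -> 0 < theta -> theta <= 1 ->
  (classLp (1 / theta) P X <->
   forall xi : R,
     asymp_equiv (fun x => tailP P X (x - xi * x `^ (1 - theta))) (tailP P X)).
Proof.
move=> X0 th0 th1.
have e : 1 / (1 / theta) = theta by rewrite !div1r invrK.
rewrite /classLp /classL e.
have tY := @tailY _ _ _ P X theta th0 th1 X0.
have Fmono := @tail_mono _ _ _ P X.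
have Fge0 := @tail_ge0 _ _ _ P X.
split.
- move=> [_ [_ Ypos [y y0 hy]]] xi.
  apply: (@fwd R theta (tailP P X) th0 th1 Fmono y y0).
    by move=> u u0; rewrite -(tY u u0); apply: Ypos.
  apply: (@ev_eq _ _ _ _ 0 _ hy) => x x0 /=.
  by rewrite !tY // addr_ge0 // ltW.
- move=> H.
  have [Fpos hG] := @bwd R theta (tailP P X) th0 th1 Fmono Fge0 H.
  split => //; split.
  + by move=> t; exact: powR_ge0.
  + by move=> x x0; rewrite tY.
  + exists 1 => //.
    apply: (@ev_eq _ _ _ _ 0 _ hG) => x x0 /=.
    by rewrite !tY // addr_ge0.
Qed.
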